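(* Let $D$ be a Ferrers diagram with $n$ rows and $n$ columns, i.e. $D = \{(a,b) : 1 \le a \le n,\ 1 \le b \le \lambda_a\}$ for integers $n = \lambda_1 \ge \lambda_2 \ge \cdots \ge \lambda_n \ge 1$. Let $G$ be its Ferrers graph: the bipartite graph with row-vertices $1,\dots,n$ and column-vertices $1,\dots,n$, row $a$ adjacent to column $b$ if and only if $(a,b) \in D$. Every Hamiltonian path of $G$ has one end a row-vertex and the other a column-vertex; write it, starting from its row end, as $a_1, b_1, a_2, b_2, \dots, a_n, b_n$ (the $a_i$ rows, the $b_i$ columns). An $n$-rook placement on $D$ is a set of $n$ boxes of $D$, no two in the same row or column. Define a map $\Phi$ on Hamiltonian paths of $G$ as follows. Set $b_0 := 1$ and start with two empty sets $A$, $B$ of boxes. For $i = 1, \dots, n$ in turn: if no box of $A$ lies in column $b_{i-1}$, add the box $(a_i, b_{i-1})$ to $A$; otherwise add to $A$ the box $(a_i, c)$, where $c$ is the smallest column index greater than $b_{i-1}$ such that no box of $A$ lies in column $c$; then add the box $(a_i, b_i)$ to $B$. Set $\Phi(\text{path}) = (A, B)$. Then $\Phi$ is well defined (in particular the column $c$ always exists and every box added to $A$ lies in $D$), and $\Phi$ is a bijection from the set of Hamiltonian paths of $G$ onto the set of ordered pairs $(A,B)$ of $n$-rook placements on $D$. Consequently the number of Hamiltonian paths of $G$ equals the square of the number of $n$-rook placements on $D$.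
   Context: Boxes are indexed as $(a,b)$ = (row, column). Hamiltonian paths are regarded as undirected paths through all $2n$ vertices; each is recorded uniquely as the vertex sequence starting from its row-vertex end. *)

(* Defs.v *)
(* Rows and columns are 0-indexed as 'I_n
   (row/column a+1 of the paper is the ordinal a). *)
From mathcomp Require Import all_boot all_order.
Set Implicit Arguments. Unset Strict Implicit. Unset Printing Implicit Defensive.

Section Ferrers.
Variables (n : nat) (lam : 'I_n -> nat).

Definition box := ('I_n * 'I_n)%type.

Definition ferrersD : {set box} := [set x : box | x.2 < lam x.1].

(* Vertices of the Ferrers graph: inl a = row vertex a, inr b = column vertex b. *)
Definition vertex := ('I_n + 'I_n)%type.

Definition is_row (v : vertex) : bool := if v is inl _ then true else false.

Definition fadj (u v : vertex) : bool :=
  match u, v with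
  | inl a, inr b => (a, b) \in ferrersD
  | inr b, inl a => (a, b) \in ferrersD
  | _, _ => false
  end.

(* A vertex sequence traversing a Hamiltonian path of the Ferrers graph:
   it visits every one of the 2n vertices exactly once, consecutive vertices
   being adjacent. (An undirected path corresponds to such a sequence up to
   reversal.) *)
Definition hamseq (s : seq vertex) : bool :=
  [&& size s == #|{: vertex}|, uniq s &
      if s is x :: t then path fadj x t else true].

Definition interleave (p : seq box) : seq vertex :=
  flatten [seq [:: inl x.1; inr x.2] | x <- p].

(* Hamiltonian paths, recorded from their row-vertex end as
   a_1 b_1 ... a_n b_n, encoded by the n-tuple of pairs (a_i, b_i). *)
Definition hamPaths : {set n.-tuple box} :=
  [set p : n.-tuple box | hamseq (interleave p)].

Definition rook_placement (A : {set box}) : bool :=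
  [&& A \subset ferrersD, #|A| == n &
      [forall x in A, forall y in A,
          (x != y) ==> (x.1 != y.1) && (x.2 != y.2)]].

Definition rookPlacements : {set {set box}} := [set A | rook_placement A].

Definition colfree (A : {set box}) (c : 'I_n) : bool :=
  [forall r : 'I_n, (r, c) \notin A].

(* column 1 (the smallest column); b_0 := 1 *)
Definition firstcol : option 'I_n := ohead (enum 'I_n).

Definition choosecol (A : {set box}) (p : 'I_n) : option 'I_n :=
  if colfree A p then Some p
  else ohead [seq c : 'I_n <- enum 'I_n | (p < c) && colfree A c].

(* prev = b_{i-1}; returns None if at some step the required column c
   does not exist (i.e. Phi is not defined). *)
Fixpoint phi_rec (prev : option 'I_n) (A B : {set box}) (s : seq box)
  : option ({set box} * {set box}) :=
  match s with
  | [::] => Some (A, B)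
  | x :: s' =>
      match obind (choosecol A) prev with
      | Some c => phi_rec (Some x.2) ((x.1, c) |: A) (x |: B) s'
      | None => None
      end
  end.

Definition Phi (p : seq box) : option ({set box} * {set box}) :=
  phi_rec firstcol set0 set0 p.

(* total version (the default value is irrelevant on hamPaths) *)
Definition PhiT (p : n.-tuple box) : {set box} * {set box} :=
  odflt (set0, set0) (Phi p).

End Ferrers.

(* Main.v *)
Require Import Defs.
From mathcomp Require Import all_boot all_order zify.
Set Implicit Arguments. Unset Strict Implicit. Unset Printing Implicit Defensive.

Section Greedy.
Variable n : nat.
Implicit Types (U P : {set 'I_n}) (A B : {set box n}).

Definition usedcols A : {set 'I_n} := [set x.2 | x in A].
Definition usedrows A : {set 'I_n} := [set x.1 | x in A].

Lemma colfreeE A c : colfree A c = (c \notin usedcols A).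
Proof.
apply/forallP/negP => [H /imsetP [x xA ex] | H r].
  by have := H x.1; rewrite ex -surjective_pairing xA.
by apply/negP => rA; apply: H; apply/imsetP; exists (r, c).
Qed.

Definition INV (pv : 'I_n) U P :=
  [/\ pv \in P \/ val pv = 0, #|U| = #|P|,
      (forall u, u \in U -> u \notin P :\ pv -> forall x : 'I_n, x <= u -> x \in U) &
      (forall t : nat, #|[set x in U | x < t]| + (pv < t) <= #|[set x in P | x < t]| + 1)].

Lemma INV0 (pv : 'I_n) : val pv = 0 -> INV pv set0 set0.
Proof.
move=> h; split => //; first by right.
  by move=> u; rewrite inE.
move=> t.
have E : [set x in (set0 : {set 'I_n}) | x < t] = set0 by apply/setP=> x; rewrite !inE.
by rewrite E cards0 h; case: (0 < t).
Qed.

Lemma card_lt1 (x : 'I_n) U t : x \notin U ->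
  #|[set y in x |: U | y < t]| = #|[set y in U | y < t]| + (x < t).
Proof.
move=> xU.
case: (ltnP x t) => xt.
  have -> : [set y in x |: U | y < t] = x |: [set y in U | y < t].
    by apply/setP => y; rewrite !inE; case: eqP => // ->; rewrite xt.
  by rewrite cardsU1 !inE (negbTE xU) addnC.
have -> : [set y in x |: U | y < t] = [set y in U | y < t].
  apply/setP => y; rewrite !inE; case: eqP => // ->.
  by rewrite (negbTE xU) ltnNge xt.
by rewrite addn0.
Qed.

Lemma card_ltT (c : nat) : c <= n -> #|[set x : 'I_n | x < c]| = c.
Proof.
move=> cn.
have inj : injective (widen_ord cn) by move=> x y h; apply: val_inj; exact: (congr1 val h).
rewrite -[in RHS](card_ord c) -(card_imset _ inj).
apply: eq_card => x; rewrite inE; apply/idP/imsetP.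
  by move=> xc; exists (Ordinal xc) => //; apply: val_inj.
by case=> y _ ->; rewrite /= ltn_ord.
Qed.

Lemma head_filter_min (Q : pred 'I_n) (c : 'I_n) :
  Q c -> (forall x : 'I_n, x < c -> ~~ Q x) ->
  ohead [seq x <- enum 'I_n | Q x] = Some c.
Proof.
move=> Qc hmin.
have srt : sorted ltn (map val [seq x <- enum 'I_n | Q x]).
  apply: (subseq_sorted ltn_trans (s2 := map val (enum 'I_n))).
    by apply: map_subseq; apply: filter_subseq.
  by rewrite val_enum_ord iota_ltn_sorted.
have : c \in [seq x <- enum 'I_n | Q x] by rewrite mem_filter Qc mem_enum.
have : all Q [seq x <- enum 'I_n | Q x] by apply: filter_all.
case: [seq x <- enum 'I_n | Q x] srt => [//|h t] /= srt /andP [Qh _].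
rewrite inE => /orP [/eqP -> //| ct].
have : all (ltn h) (map val t) by apply: (order_path_min ltn_trans).
move/allP => /(_ (val c)); rewrite map_f // => /(_ isT) hc.
by have := hmin h hc; rewrite Qh.
Qed.


Lemma INV_step pv U P (c b : 'I_n) : INV pv U P -> c \notin U -> pv <= c ->
  b \notin P -> (c = pv \/ forall x : 'I_n, x < c -> x \in U) ->
  INV b (c |: U) (b |: P).
Proof.
case=> G0 G1 GI GK cU pvc bP hc.
have sub : forall u, u \in P :\ pv -> u \in (b |: P) :\ b.
  move=> u; rewrite !inE => /andP [upv uP]; rewrite uP orbT andbT.
  by apply/eqP => ub; move: bP; rewrite -ub uP.
split.
- by left; rewrite !inE eqxx.
- by rewrite !cardsU1 cU bP G1.
- move=> u; rewrite in_setU1 => /orP [/eqP -> | uU] hu x xu.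
    case: hc => [cpv | hlt].
      case: G0 => [pvP | pv0].
        have : pv \in (b |: P) :\ b.
          by rewrite !inE pvP orbT andbT; apply/eqP => e; move: bP; rewrite -e pvP.
        by rewrite -cpv (negbTE hu).
      rewrite in_setU1; apply/orP; left; apply/eqP; apply: val_inj.
      by rewrite cpv pv0; move: xu; rewrite cpv pv0 leqn0 => /eqP.
    rewrite in_setU1; case: (ltngtP x c) xu => // [xc _ | /val_inj -> _].
      by rewrite hlt ?orbT.
    by rewrite eqxx.
  rewrite in_setU1 (GI u) ?orbT //; apply/negP => /sub; by rewrite (negbTE hu).
- move=> t; rewrite card_lt1 // card_lt1 //.
  have := GK t.
  have : (c < t) <= (pv < t).
    case: (ltnP c t) => // ct. by rewrite (leq_ltn_trans pvc ct).
  lia.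
Qed.

Lemma greedy_step pv U P A : INV pv U P -> usedcols A = U -> #|U| < n ->
  exists c, [/\ choosecol A pv = Some c, c \notin U, pv <= c &
    forall b, b \notin P -> (c = pv \/ c <= b) /\ INV b (c |: U) (b |: P)].
Proof.
move=> inv UA Un; have inv' := inv; case: inv' => G0 G1 GI GK.
case: (boolP (pv \in U)) => pvU; last first.
  exists pv; split => //.
    by rewrite /choosecol colfreeE UA pvU.
  move=> b bP; split; first by left.
  exact: INV_step inv pvU (leqnn _) bP (or_introl erefl).
have hle : forall x : 'I_n, x <= pv -> x \in U.
  by apply: GI pvU _; rewrite !inE eqxx.
have [x0 x0U] : exists x0, x0 \notin U.
  case: (pickP [pred x | x \notin U]) => [x0 /= x0U | H]; first by exists x0.
  have : U = setT by apply/setP => x; have := H x; rewrite !inE /=; case: (x \in U).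
  by move=> UT; move: Un; rewrite UT cardsT card_ord ltnn.
case: (@arg_minnP _ x0 [pred i | i \notin U] val x0U) => c /= cU cmin.
have cmin' : forall x : 'I_n, x < c -> x \in U.
  move=> x xc; apply/negPn/negP => xU.
  by have := cmin x xU; rewrite leqNgt xc.
have pvc : pv < c.
  by rewrite ltnNge; apply/negP => /hle; rewrite (negbTE cU).
have ch : choosecol A pv = Some c.
  rewrite /choosecol colfreeE UA pvU /=.
  apply: head_filter_min; first by rewrite pvc colfreeE UA cU.
  by move=> x xc; rewrite colfreeE UA cmin' ?andbF.
exists c; split => //; first exact: ltnW.
- move=> b bP; split; last exact: INV_step inv cU (ltnW pvc) bP (or_intror cmin').
  right; have := GK c.
  have -> : [set x in U | x < c] = [set x : 'I_n | x < c].
    by apply/setP => x; rewrite !inE; case xc: (x < c); rewrite ?andbF ?cmin'.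
  rewrite card_ltT ?pvc; last by apply: ltnW; apply: ltn_ord.
  move=> hc0; have hc : c <= #|[set x in P | x < c]| by move: hc0; rewrite /= !addn1 ltnS.
  have sub : [set x in P | x < c] \subset [set x : 'I_n | x < c].
    by apply/subsetP => x; rewrite !inE => /andP [].
  have : [set x in P | x < c] == [set x : 'I_n | x < c].
    rewrite eqEcard sub /= card_ltT //; by apply: ltnW; apply: ltn_ord.
  move/eqP/setP => E; rewrite leqNgt; apply/negP => bc.
  by have := E b; rewrite !inE bc (negbTE bP).
Qed.

End Greedy.

Section Rook.
Variable n : nat.
Implicit Types (A B : {set box n}).

Definition prook A := [forall x in A, forall y in A,
          (x != y) ==> (x.1 != y.1) && (x.2 != y.2)].

Lemma prook_row A x y : prook A -> x \in A -> y \in A -> x.1 = y.1 -> x = y.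
Proof.
move=> /forall_inP /(_ x) H xA yA e; have /forall_inP /(_ y yA) := H xA.
by rewrite e eqxx /=; case: eqP.
Qed.

Lemma prook_col A x y : prook A -> x \in A -> y \in A -> x.2 = y.2 -> x = y.
Proof.
move=> /forall_inP /(_ x) H xA yA e; have /forall_inP /(_ y yA) := H xA.
by rewrite e eqxx /= andbF; case: eqP.
Qed.

Lemma prookU A x : prook A -> x.1 \notin usedrows A -> x.2 \notin usedcols A ->
  prook (x |: A).
Proof.
move=> pA xr xc; apply/forall_inP => y; rewrite in_setU1 => /orP [/eqP -> | yA];
  apply/forall_inP => z; rewrite in_setU1 => /orP [/eqP -> | zA];
  apply/implyP => ne.
- by rewrite eqxx in ne.
- apply/andP; split; apply/negP => /eqP e.
    by move: xr; rewrite e; case/negP; apply/imsetP; exists z.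
  by move: xc; rewrite e; case/negP; apply/imsetP; exists z.
- apply/andP; split; apply/negP => /eqP e.
    by move: xr; rewrite -e; case/negP; apply/imsetP; exists y.
  by move: xc; rewrite -e; case/negP; apply/imsetP; exists y.
- by move/forall_inP: pA => /(_ y yA) /forall_inP /(_ z zA) /implyP; apply.
Qed.

Lemma usedcolsU1 A x : usedcols (x |: A) = x.2 |: usedcols A.
Proof. by rewrite /usedcols imsetU1. Qed.
Lemma usedrowsU1 A x : usedrows (x |: A) = x.1 |: usedrows A.
Proof. by rewrite /usedrows imsetU1. Qed.

Lemma card_usedcols A : prook A -> #|usedcols A| = #|A|.
Proof.
move=> pA; apply: card_in_imset => x y xA yA; exact: (prook_col pA xA yA).
Qed.
Lemma card_usedrows A : prook A -> #|usedrows A| = #|A|.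
Proof.
move=> pA; apply: card_in_imset => x y xA yA; exact: (prook_row pA xA yA).
Qed.

Definition rowA A (c : 'I_n) : 'I_n := odflt c [pick r | (r, c) \in A].
Definition colB B (a : 'I_n) : 'I_n := odflt a [pick j | (a, j) \in B].

Lemma rowA_spec A r c : prook A -> (r, c) \in A -> rowA A c = r.
Proof.
move=> pA rA; rewrite /rowA; case: pickP => [r' /= r'A | /(_ r) /=]; last by rewrite rA.
by have := prook_col pA r'A rA erefl; case.
Qed.

Lemma colB_spec B a j : prook B -> (a, j) \in B -> colB B a = j.
Proof.
move=> pB aB; rewrite /colB; case: pickP => [j' /= j'B | /(_ j) /=]; last by rewrite aB.
by have := prook_row pB j'B aB erefl; case.
Qed.

Lemma full_cols A : prook A -> #|A| = n -> forall c, exists r, (r, c) \in A.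
Proof.
move=> pA cA c.
have : usedcols A = setT.
  apply/eqP; rewrite eqEcard subsetT cardsT. by rewrite /= card_usedcols // cA card_ord.
move/setP => /(_ c); rewrite inE => /imsetP [x xA ->].
by exists x.1; rewrite -surjective_pairing.
Qed.

Lemma full_rows A : prook A -> #|A| = n -> forall r, exists c, (r, c) \in A.
Proof.
move=> pA cA r.
have : usedrows A = setT.
  by apply/eqP; rewrite eqEcard subsetT cardsT /= card_usedrows // cA card_ord.
move/setP => /(_ r); rewrite inE => /imsetP [x xA ->].
by exists x.2; rewrite -surjective_pairing.
Qed.

Fixpoint psi_rec (Af Bf : {set box n}) (k : nat) (prev : option 'I_n) (A : {set box n})
  : seq (box n) :=
  match k with
  | 0 => [::]
  | k'.+1 =>
    match obind (choosecol A) prev with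
    | Some c => let a := rowA Af c in let b := colB Bf a in
                (a, b) :: psi_rec Af Bf k' (Some b) ((a, c) |: A)
    | None => [::]
    end
  end.

Lemma phi_mono s pv A B Af Bf : phi_rec pv A B s = Some (Af, Bf) ->
  A \subset Af /\ B \subset Bf.
Proof.
elim: s pv A B => [|x s IH] pv A B /=; first by case=> -> ->.
case: (obind (choosecol A) pv) => [c|//] /IH [h1 h2].
by split; [apply: subset_trans h1 | apply: subset_trans h2]; rewrite subsetUr.
Qed.

Lemma psi_phi s pv A B Af Bf : phi_rec pv A B s = Some (Af, Bf) ->
  prook Af -> prook Bf -> psi_rec Af Bf (size s) pv A = s.
Proof.
elim: s pv A B => [|[a b] s IH] pv A B //= .
case: (obind (choosecol A) pv) => [c|//] H pA pB.
have [/subsetP s1 /subsetP s2] := phi_mono H.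
have ra : rowA Af c = a by apply: rowA_spec pA (s1 _ _); rewrite setU11.
rewrite ra.
have cb : colB Bf a = b by apply: colB_spec pB (s2 _ _); rewrite setU11.
by rewrite cb (IH _ _ _ H).
Qed.

End Rook.

Section Run.
Variables (n : nat) (lam : 'I_n -> nat).
Implicit Types (A B : {set box n}).

Definition Rel (x y : box n) : bool := (y.1, x.2) \in ferrersD lam.

Lemma inD (x : box n) : (x \in ferrersD lam) = (x.2 < lam x.1).
Proof. by rewrite inE. Qed.

Lemma card_lt_n (P : {set 'I_n}) (b : 'I_n) : b \notin P -> #|P| < n.
Proof.
move=> bP; have : P \subset [set~ b].
  by apply/subsetP => x xP; rewrite !inE; apply/eqP => e; move: bP; rewrite -e xP.
move/subset_leq_card; rewrite cardsC1 card_ord => h.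
have := ltn_ord b; lia.
Qed.

Lemma phi_run s pv A B :
  INV pv (usedcols A) (usedcols B) -> prook A -> prook B ->
  A \subset ferrersD lam -> B \subset ferrersD lam ->
  uniq (map fst s) -> uniq (map snd s) -> all (mem (ferrersD lam)) s ->
  (forall x, x \in s -> [&& x.1 \notin usedrows A, x.1 \notin usedrows B & x.2 \notin usedcols B]) ->
  (if s is x :: t then (pv < lam x.1) && path Rel x t else true) ->
  exists Af Bf, [/\ phi_rec (Some pv) A B s = Some (Af, Bf), prook Af, prook Bf,
     (Af \subset ferrersD lam) && (Bf \subset ferrersD lam) &
     #|Af| = #|A| + size s /\ #|Bf| = #|B| + size s].
Proof.
elim: s pv A B => [|[a b] s IH] pv A B inv pA pB AD BD /=.
  by move=> *; exists A, B; rewrite AD BD !addn0.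
move=> /andP [as1 us1] /andP [bs2 us2] /andP [abD aD] hs /andP [pva hp].
have /and3P [aA aB bB] := hs (a, b) (mem_head _ _).
have Un : #|usedcols A| < n.
  by case: inv => _ -> _ _; apply: card_lt_n bB.
have [c [ch cU pvc hb]] := greedy_step inv erefl Un.
have [cb inv'] := hb b bB.
rewrite ch.
have acD : (a, c) \in ferrersD lam.
  rewrite inD /=; case: cb => [-> // | cb]; rewrite inD /= in abD.
  exact: leq_ltn_trans cb abD.
have acA : (a, c) \notin A.
  by apply/negP => h; move: cU; rewrite -[c]/((a,c).2); case/negP; apply/imsetP; exists (a, c).
have abB : (a, b) \notin B.
  by apply/negP => h; move: bB; case/negP; apply/imsetP; exists (a, b).
have := IH b ((a, c) |: A) ((a, b) |: B).
rewrite !usedcolsU1 /= => /(_ inv').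
case.
- exact: prookU.
- exact: prookU.
- by rewrite subUset sub1set acD.
- by rewrite subUset sub1set abD.
- done.
- done.
- done.
- move=> x xs; rewrite !usedrowsU1 !in_setU1 /=.
  have xs' : x \in (a, b) :: s by rewrite inE xs orbT.
  have /and3P [h1 h2 h3] := hs x xs'.
  have -> : (x.1 == a) = false by apply/negP => /eqP e; move: as1; rewrite -e map_f.
  have -> : (x.2 == b) = false by apply/negP => /eqP e; move: bs2; rewrite -e map_f.
  by rewrite /= h1 h2 h3.
- by move: hp; case: (s) => //= y t /andP [r ->]; move: r; rewrite /Rel inD andbT.
move=> Af [Bf [-> pAf pBf sub [cA cB]]].
exists Af, Bf; split => //.
by rewrite cA cB !cardsU1 acA abB; split; rewrite /= ?add1n ?addSn ?addnS.
Qed.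


Lemma psi_run A0 B0 k pv A B s :
  rook_placement lam A0 -> rook_placement lam B0 ->
  INV pv (usedcols A) (usedcols B) -> A \subset A0 -> B \subset B0 ->
  usedrows A = usedrows B -> #|A| + k = n -> #|B| = #|A| ->
  s = psi_rec A0 B0 k (Some pv) A ->
  [/\ size s = k, uniq (map fst s), uniq (map snd s), all (mem (ferrersD lam)) s &
    [/\ (forall x, x \in s -> (x.1 \notin usedrows A) && (x.2 \notin usedcols B)),
      (if s is x :: t then (pv < lam x.1) && path Rel x t else true) &
      exists Af Bf, [/\ phi_rec (Some pv) A B s = Some (Af, Bf), Af \subset A0,
                        Bf \subset B0, #|Af| = n & #|Bf| = n]]].
Proof.
move=> /and3P [A0D /eqP cA0 pA0] /and3P [B0D /eqP cB0 pB0].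
elim: k pv A B s => [|k IH] pv A B s inv sA sB rAB cA cB -> /=.
  move: cA; rewrite addn0 => cA.
  split => //; split => //; exists A, B; split => //; by rewrite ?cB cA.
have Un : #|usedcols A| < n.
  have h := leq_imset_card (fun x : box n => x.2) (mem A).
  have hA : #|A| < #|A| + k.+1 by rewrite addnS ltnS leq_addr.
  rewrite cA in hA; rewrite /usedcols; exact: leq_ltn_trans h hA.
have [c [ch cU pvc hb]] := greedy_step inv erefl Un.
rewrite ch.
set a := rowA A0 c; set b := colB B0 a.
have acA0 : (a, c) \in A0.
  have [r rc] := full_cols pA0 cA0 c.
  by rewrite /a (rowA_spec pA0 rc).
have abB0 : (a, b) \in B0.
  have [j aj] := full_rows pB0 cB0 a.
  by rewrite /b (colB_spec pB0 aj).
have aA : a \notin usedrows A.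
  apply/negP => /imsetP [y yA ey].
  have e := prook_row pA0 (subsetP sA _ yA) acA0 (esym ey).
  by move: cU; rewrite -[c]/((a, c).2) -e; case/negP; apply/imsetP; exists y.
have aB : a \notin usedrows B by rewrite -rAB.
have bB : b \notin usedcols B.
  apply/negP => /imsetP [y yB ey].
  have e := prook_col pB0 (subsetP sB _ yB) abB0 (esym ey).
  by move: aB; rewrite -[a]/((a, b).1) -e; case/negP; apply/imsetP; exists y.
have [cb inv'] := hb b bB.
have acA : (a, c) \notin A.
  by apply/negP => h; move: cU; rewrite -[c]/((a,c).2); case/negP; apply/imsetP; exists (a, c).
have abB : (a, b) \notin B.
  by apply/negP => h; move: bB; case/negP; apply/imsetP; exists (a, b).
have := IH b ((a, c) |: A) ((a, b) |: B) _ _ _ _ _ _ _ erefl.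
rewrite !usedcolsU1 !usedrowsU1 /= rAB => /(_ inv').
case.
- by rewrite subUset sub1set acA0 sA.
- by rewrite subUset sub1set abB0 sB.
- done.
- by rewrite cardsU1 acA /= add1n addSn -addnS.
- by rewrite !cardsU1 acA abB cB.
move=> sz u1 u2 aD [hs hp [Af [Bf [eq sAf sBf cAf cBf]]]].
set s' := psi_rec A0 B0 k (Some b) ((a, c) |: A) in sz u1 u2 aD hs hp eq *.
have hs1 : forall x, x \in s' -> (x.1 != a) && (x.2 != b).
  by move=> x /hs; rewrite !in_setU1 !negb_or => /andP [/andP [-> _] /andP [-> _]].
split.
- by rewrite sz.
- rewrite /= u1 andbT; apply/negP => /mapP [x xs e].
  by have := hs1 x xs; rewrite e eqxx.
- rewrite /= u2 andbT; apply/negP => /mapP [x xs e].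
  by have := hs1 x xs; rewrite e eqxx andbF.
- by rewrite /= aD andbT (subsetP B0D).
split.
- move=> x; rewrite inE => /orP [/eqP -> | xs]; first by rewrite /= aB bB.
  by move: (hs x xs); rewrite !in_setU1 !negb_or => /andP [/andP [_ ->] /andP [_ ->]].
- apply/andP; split.
    have := subsetP A0D _ acA0; rewrite inD /= => h.
    exact: leq_ltn_trans pvc h.
  by move: hp; case: (s') => //= y t /andP [r ->]; rewrite /Rel inD /= r.
- by exists Af, Bf; rewrite /= ch.
Qed.

End Run.

Section Ham.
Variables (n : nat) (lam : 'I_n -> nat).

Lemma size_il (p : seq (box n)) : size (interleave p) = size p + size p.
Proof. by elim: p => //= x p ->; rewrite addnS. Qed.

Lemma mem_il_l (a : 'I_n) (p : seq (box n)) :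
  (inl a \in interleave p) = (a \in map fst p).
Proof. by elim: p => //= x p IH; rewrite !inE IH. Qed.

Lemma mem_il_r (a : 'I_n) (p : seq (box n)) :
  (inr a \in interleave p) = (a \in map snd p).
Proof. by elim: p => //= x p IH; rewrite !inE IH. Qed.

Lemma uniq_il (p : seq (box n)) :
  uniq (interleave p) = uniq (map fst p) && uniq (map snd p).
Proof.
elim: p => //= x p IH; rewrite !inE mem_il_l mem_il_r IH /=.
by case: (x.1 \in _); case: (x.2 \in _); case: (uniq _); case: (uniq _).
Qed.

Lemma path_il (x : box n) (t : seq (box n)) :
  path (fadj lam) (inl x.1) (inr x.2 :: interleave t) =
  all (mem (ferrersD lam)) (x :: t) && path (Rel lam) x t.
Proof.
elim: t x => [|y t IH] x; first by rewrite /= !andbT -surjective_pairing.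
change (fadj lam (inl x.1) (inr x.2) && (fadj lam (inr x.2) (inl y.1) &&
   path (fadj lam) (inl y.1) (inr y.2 :: interleave t)) =
   all (mem (ferrersD lam)) [:: x, y & t] && path (Rel lam) x (y :: t)).
rewrite IH /= /Rel -!surjective_pairing.
by case: (x \in ferrersD lam); case: (y \in ferrersD lam); case: ((y.1, x.2) \in ferrersD lam); case: all; case: path.
Qed.

Lemma ham_il (p : seq (box n)) : size p = n ->
  hamseq lam (interleave p) = [&& uniq (map fst p), uniq (map snd p),
     all (mem (ferrersD lam)) p & (if p is x :: t then path (Rel lam) x t else true)].
Proof.
move=> sp; rewrite /hamseq size_il sp card_sum card_ord eqxx /= uniq_il -!andbA.
case: p sp => [|x t] _ //.
change (interleave (x :: t)) with (inl x.1 :: inr x.2 :: interleave t).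
lazy beta iota; rewrite path_il.
by case: (uniq _); case: (uniq _); case: all; case: path.
Qed.

Lemma fadj_row (x y : vertex n) : fadj lam x y -> is_row y = ~~ is_row x.
Proof. by case: x y => [a|b] [c|d]. Qed.

Lemma path_parity (x : vertex n) t : path (fadj lam) x t ->
  is_row (last x t) = is_row x (+) odd (size t).
Proof.
elim: t x => [|y t IH] x /=; first by rewrite addbF.
case/andP => /fadj_row h /IH ->; rewrite h.
by case: (is_row x); case: (odd _).
Qed.

Lemma odd_pred_double m : 0 < m -> odd (m + m).-1.
Proof. by case: m => // m _; rewrite addSn /= addnS /= addnn odd_double. Qed.

Lemma part1 (Hn : 0 < n) (s : seq (vertex n)) : hamseq lam s ->
  if s is x :: t then is_row x != is_row (last x t) else false.
Proof.
case/and3P => /eqP; rewrite card_sum card_ord => sz _.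
case: s sz => [|x t] /=; first by move=> h; move: (ltn_addr n Hn); rewrite -h.
move=> sz /path_parity ->; have -> : size t = (n + n).-1 by rewrite -sz.
rewrite odd_pred_double //.
by case: (is_row x).
Qed.

Fixpoint pairs (s : seq (vertex n)) : seq (box n) :=
  match s with
  | inl a :: inr b :: t => (a, b) :: pairs t
  | _ => [::]
  end.

Lemma pairsK k (s : seq (vertex n)) : size s = k + k ->
  (if s is x :: t then is_row x && path (fadj lam) x t else true) ->
  interleave (pairs s) = s.
Proof.
elim: k s => [|k IH] [|x [|y t]] //=; rewrite ?addnS ?addSn //.
case=> sz; case: x => // a; case: y => // b /= /andP [ab hp].
congr (_ :: _ :: _); apply: IH => //.
case: t {sz} hp => // z t hp; move: hp; rewrite [path _ _ _]/= => /andP [h ->]; by case: z h.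
Qed.

Lemma part2 (s : seq (vertex n)) : hamseq lam s ->
  (if s is x :: _ then is_row x else false) ->
  exists p : n.-tuple (box n), s = interleave p.
Proof.
case/and3P => /eqP; rewrite card_sum card_ord => sz _ hp hr.
have e : interleave (pairs s) = s.
  apply: (pairsK sz); case: s sz hp hr => //= x t _ -> ->.
  done.
have szp : size (pairs s) == n.
  have : size (interleave (pairs s)) = n + n by rewrite e.
  rewrite size_il => h; apply/eqP; lia.
by exists (Tuple szp).
Qed.

End Ham.

Section Main.
Variables (n : nat) (lam : 'I_n -> nat).

Lemma firstcol0 : 0 < n -> exists pv : 'I_n, firstcol n = Some pv /\ val pv = 0.
Proof.
move=> Hn; rewrite /firstcol.
have := val_enum_ord n.
case: (enum 'I_n) => [|x t] /=.
  by case: n Hn.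
move=> h; exists x; split => //.
have := congr1 (head 0) h; rewrite /= => ->.
by case: (n) Hn.
Qed.

Lemma prook0 : prook (set0 : {set box n}).
Proof. by apply/forall_inP => x; rewrite inE. Qed.

Lemma usedcols0 : usedcols (set0 : {set box n}) = set0.
Proof. by rewrite /usedcols imset0. Qed.
Lemma usedrows0 : usedrows (set0 : {set box n}) = set0.
Proof. by rewrite /usedrows imset0. Qed.

Lemma phiH (Hn : 0 < n) (p : n.-tuple (box n)) : p \in hamPaths lam ->
  exists Af Bf, [/\ Phi p = Some (Af, Bf), prook Af, prook Bf,
     rook_placement lam Af & rook_placement lam Bf].
Proof.
rewrite inE ham_il ?size_tuple // => /and4P [u1 u2 aD hp].
have [pv [fc pv0]] := firstcol0 Hn.
have := @phi_run n lam p pv set0 set0.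
rewrite usedcols0 usedrows0 => /(_ (INV0 pv0) prook0 prook0 (sub0set _) (sub0set _) u1 u2 aD).
case.
- by move=> x _; rewrite !inE.
- move: hp aD; case: (tval p) => //= x t -> /andP [xD _]; rewrite andbT.
  by rewrite inD in xD; rewrite pv0; apply: leq_ltn_trans xD.
move=> Af [Bf [e pA pB /andP [sA sB] [cA cB]]].
exists Af, Bf; split => //.
- by rewrite /Phi fc.
- by apply/and3P; split => //; rewrite cA cards0 size_tuple.
- by apply/and3P; split => //; rewrite cB cards0 size_tuple.
Qed.

End Main.

Theorem mainTheorem2 (n : nat) (lam : 'I_n -> nat)
  (Hn : 0 < n)
  (Hfirst : forall i : 'I_n, val i = 0 -> lam i = n)
  (Hmono : forall i j : 'I_n, i <= j -> lam j <= lam i)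
  (Hpos : forall i : 'I_n, 1 <= lam i) :
  (* every Hamiltonian path has one row end and one column end *)
  (forall s : seq (vertex n), hamseq lam s ->
     if s is x :: t then is_row x != is_row (last x t) else false) /\
  (* read from its row end, it has the form a_1, b_1, ..., a_n, b_n *)
  (forall s : seq (vertex n), hamseq lam s ->
     (if s is x :: _ then is_row x else false) ->
     exists p : n.-tuple (box n), s = interleave p) /\
  (* Phi is well defined on Hamiltonian paths *)
  (forall p, p \in hamPaths lam -> Phi p != None) /\
  (* Phi is a bijection onto pairs of n-rook placements *)
  {in hamPaths lam &, injective (@PhiT n)} /\
  (@PhiT n) @: hamPaths lam = setX (rookPlacements lam) (rookPlacements lam) /\
  (* consequence *)
  #|hamPaths lam| = #|rookPlacements lam| ^ 2.
Proof.
have inj : {in hamPaths lam &, injective (@PhiT n)}.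
  move=> p q hp hq.
  have [Af [Bf [ep pA pB _ _]]] := phiH Hn hp.
  have [Af' [Bf' [eq pA' pB' _ _]]] := phiH Hn hq.
  rewrite /PhiT ep eq /= => -[e1 e2]; subst Af' Bf'.
  apply: val_inj => /=.
  rewrite -(psi_phi ep pA pB) -(psi_phi eq pA pB) !size_tuple //.
have img : (@PhiT n) @: hamPaths lam = setX (rookPlacements lam) (rookPlacements lam).
  apply/setP => -[A0 B0]; rewrite !inE; apply/imsetP/andP.
    case=> p hp ->; have [Af [Bf [ep _ _ rA rB]]] := phiH Hn hp.
    by rewrite /PhiT ep /=.
  move=> -[rA rB].
  have [pv [fc pv0]] := firstcol0 Hn.
  have := @psi_run n lam A0 B0 n pv set0 set0 (psi_rec A0 B0 n (Some pv) set0) rA rB.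
  rewrite usedcols0 usedrows0 => /(_ (INV0 pv0) (sub0set _) (sub0set _) erefl).
  rewrite cards0 => /(_ erefl erefl erefl).
  set s := psi_rec _ _ _ _ _.
  case=> sz u1 u2 aD [_ hh [Af [Bf [e sA sB cA cB]]]].
  have szp : size s == n by rewrite sz.
  exists (Tuple szp).
    rewrite inE ham_il //=; rewrite u1 u2 aD /=.
    by move: hh; case: (s) => // x t /andP [].
  rewrite /PhiT /Phi fc /= e /=.
  move: rA rB => /and3P [_ /eqP cA0 _] /and3P [_ /eqP cB0 _].
  have -> : Af = A0 by apply/eqP; rewrite eqEcard sA /= cA0 cA.
  have -> : Bf = B0 by apply/eqP; rewrite eqEcard sB /= cB0 cB.
  done.
split; first exact: part1.
split; first exact: part2.
split.
  by move=> p hp; have [Af [Bf [-> _ _ _ _]]] := phiH Hn hp.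
split; first exact: inj.
split; first exact: img.
by rewrite -(card_in_imset inj) img cardsX mulnn.
Qed.
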